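(* For every complex $s=\sigma+it$ with $\frac12<\sigma\leq\frac34$, $$|g(s)|<\frac{1.0053}{\sigma-\frac12}.$$
   Context: For $\mathrm{Re}(s)>1/2$ define $g(s)=\sum_{r\ge 2}\sum_{p}\frac{\log p}{p^{rs}}=\sum_p\frac{\log p}{p^s(p^s-1)}$, where $p$ runs over the primes. *)

(* Defs.v *)
From Stdlib Require Import Reals ZArith Znumtheory.
From Coquelicot Require Import Coquelicot.
Open Scope R_scope.

(* Complex power x^s for a real x > 0 and complex s = sigma + i t:
   x^s = exp(s log x) = x^sigma (cos(t log x) + i sin(t log x)). *)
Definition cpow (x : R) (s : C) : C :=
  (exp (fst s * ln x) * cos (snd s * ln x),
   exp (fst s * ln x) * sin (snd s * ln x)).

(* n-th term of the series defining g(s): log p / (p^s (p^s - 1)) if n = p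
   is prime, and 0 otherwise. *)
Definition g_term (s : C) (n : nat) : C :=
  if prime_dec (Z.of_nat n) then
    Cdiv (RtoC (ln (INR n))) (Cmult (cpow (INR n) s) (Cminus (cpow (INR n) s) (RtoC 1)))
  else RtoC 0.

(* Main.v *)
Require Import Defs.
From Stdlib Require Import Reals ZArith Znumtheory Lia Lra.
From Coquelicot Require Import Coquelicot.
From mathcomp Require Import all_boot.
From mathcomp Require Import zify.
Close Scope R_scope.
Local Open Scope nat_scope.
Lemma prime_bridge n : Znumtheory.prime (Z.of_nat n) <-> prime n.
Proof.
split.
- move/Znumtheory.prime_alt => [H1 H2].
  apply/primeP; split; first by apply/ltP; lia.
  move=> d /dvdnP [k Hk0'].
  have Hk : n = Nat.mul k d by exact Hk0'.
  have Hn : (0 < n)%coq_nat by lia.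
  case: (Nat.eq_dec d 1) => [->|Hd1]; first by apply/orP; left.
  case: (Nat.eq_dec d n) => [->|Hdn]; first by apply/orP; right.
  exfalso.
  have Hk0 : k <> 0%nat by move=> E; rewrite E /= in Hk; lia.
  have Hd0 : d <> 0%nat by move=> E; rewrite E in Hk; lia.
  have Hdle : (d <= n)%coq_nat by nia.
  apply: (H2 (Z.of_nat d)); first by lia.
  exists (Z.of_nat k); rewrite Hk; lia.
- move=> Hp; apply/Znumtheory.prime_alt.
  have /primeP [H1 H2] := Hp.
  move/ltP: H1 => H1.
  split; first by lia.
  move=> m Hm [z Hz].
  have Hz0 : (0 < z)%Z by nia.
  have Hd : (Z.to_nat m %| n)%N.
    apply/dvdnP; exists (Z.to_nat z); change (n = Nat.mul (Z.to_nat z) (Z.to_nat m)); nia.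
  move: (H2 _ Hd) => /orP [] /eqP E; lia.
Qed.
Lemma bin_le4 m : 'C(m.*2.+1, m) <= 4 ^ m.
Proof.
have H := expnDn 1 1 (m.*2.+1).
have h1 : m < m.*2.+2 by lia.
have h2 : m.+1 < m.*2.+2 by lia.
rewrite (bigD1 (Ordinal h1)) //= (bigD1 (Ordinal h2)) /= in H; last first.
  by apply/eqP => /(f_equal val) /=; lia.
rewrite !exp1n !muln1 in H.
have E : 'C(m.*2.+1, m.+1) = 'C(m.*2.+1, m).
  rewrite -bin_sub; last by lia.
  congr binomial; lia.
rewrite E in H.
have : 2 * 'C(m.*2.+1, m) <= 2 ^ (m.*2.+1) by rewrite H; lia.
rewrite expnS -(mul2n m) expnM.

by rewrite leq_pmul2l.
Qed.

Lemma Q_dvd m : \prod_(m.+2 <= p < m.*2.+2 | prime p) p %| 'C(m.*2.+1, m).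
Proof.
have Hf : m.*2.+1`! = m.+1`! * \prod_(m.+2 <= k < m.*2.+2) k.
  apply: fact_split; lia.
have Hb : 'C(m.*2.+1, m.+1) * (m.+1`! * (m.*2.+1 - m.+1)`!) = m.*2.+1`!.
  apply: bin_fact; lia.
have Es : m.*2.+1 - m.+1 = m by lia.
rewrite Es Hf in Hb.
have E2 : \prod_(m.+2 <= k < m.*2.+2) k = 'C(m.*2.+1, m.+1) * m`!.
  apply/eqP; rewrite -(eqn_pmul2l (fact_gt0 m.+1)); apply/eqP.
  rewrite -Hb mulnCA mulnA; congr (_ * _); apply: mulnC.
have Hc : coprime (\prod_(m.+2 <= p < m.*2.+2 | prime p) p) m`!.
  rewrite big_nat_cond.
  apply: (big_ind (fun x => coprime x m`!)).
  - exact: coprime1n.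
  - by move=> x y Hx Hy; rewrite coprimeMl Hx Hy.
  move=> p /andP[] /andP [Hp1 Hp2] Hp.
  rewrite prime_coprime //; rewrite fact_prod big_nat_cond.
  apply: (big_ind (fun x => ~~ (p %| x))).
  - by rewrite Euclid_dvd1.
  - by move=> x y Hx Hy; rewrite Euclid_dvdM // negb_or Hx Hy.
  move=> i /andP [] /andP [Hi0 Hi] _; apply/negP => /dvdn_leq H.
  have : 0 < i by []. move=> /H. lia.
have E3 : 'C(m.*2.+1, m.+1) = 'C(m.*2.+1, m).
  rewrite -bin_sub; last by lia.
  congr binomial; lia.
rewrite -(Gauss_dvdl _ Hc) -E3 -E2.
rewrite (big_mkcond (fun p => prime p)) /=.
apply: (big_ind2 (fun x y => x %| y)) => //.
- by move=> ? ? ? ? ? ?; apply: dvdn_mul.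
move=> i _; case: (prime i) => //.
Qed.

Definition Pp n := \prod_(0 <= p < n.+1 | prime p) p.

Lemma Pp_le n : Pp n.+1 <= 4 ^ n.
Proof.
elim/ltn_ind: n => n IH.
case: n IH => [|[|n]] IH; first by rewrite /Pp unlock.
  by rewrite /Pp unlock.
case: (boolP (odd n)) => Hodd.
-
  have Hnp : prime n.+3 = false.
    apply/negbTE; apply/negP => Hp.
    have H2 : 2 %| n.+3 by rewrite dvdn2 /= negbK Hodd.
    move: (prime_nt_dvdP Hp (isT : 2 != 1) H2); lia.
  rewrite /Pp big_mkcond big_nat_recr //= Hnp muln1 -big_mkcond.
  apply: (leq_trans (IH n.+1 _)) => //.
  by rewrite leq_exp2l.
-
  have En : n = (n./2).*2 by rewrite -{1}(odd_double_half n) (negbTE Hodd).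
  move: (n./2) En => k En.
  have Hsplit : Pp n.+3 = Pp k.+2 * \prod_(k.+1.+2 <= p < k.+1.*2.+2 | prime p) p.
    rewrite /Pp (@big_cat_nat _ _ _ k.+3) //; try lia.
    congr (_ * _); congr bigop; congr index_iota; lia.
  rewrite Hsplit.
  have H1 : Pp k.+2 <= 4 ^ k.+1 by apply: IH; lia.
  have H2 : \prod_(k.+1.+2 <= p < k.+1.*2.+2 | prime p) p <= 4 ^ k.+1.
    apply: leq_trans (bin_le4 k.+1).
    apply: dvdn_leq; last exact: Q_dvd.
    by rewrite bin_gt0; lia.
  apply: leq_trans (leq_mul H1 H2) _.
  rewrite -expnD leq_exp2l //; lia.
Qed.

Open Scope R_scope.
Definition lp (n:nat) : R := if prime_dec (Z.of_nat n) then ln (INR n) else 0.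

Lemma Pp_pos N : (0 < Pp N)%N.
Proof.
rewrite /Pp; apply: (big_ind (fun x => 0 < x)%N) => //.
- by move=> x y; rewrite muln_gt0 => -> ->.
- by move=> i /prime_gt0.
Qed.

Lemma Pp_S N : Pp N.+1 = (Pp N * (if prime N.+1 then N.+1 else 1))%N.
Proof. by rewrite /Pp big_mkcond big_nat_recr //= -big_mkcond. Qed.

Lemma theta_eq N : sum_f_R0 lp N = ln (INR (Pp N)).
Proof.
elim: N => [|N IH].
- have -> : Pp 0 = 1%N by rewrite /Pp unlock.
  rewrite /= /lp.
  case: (prime_dec (Z.of_nat 0)) => [H|H] /=; first by (move/Znumtheory.prime_alt: H => [H0 _]; lia).
  by rewrite ln_1.
- rewrite /= IH Pp_S /lp.
  case: (prime_dec (Z.of_nat N.+1)) => [H|H] /=.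
  + have Hp : prime N.+1 by apply/prime_bridge.
    rewrite Hp.
    change (Pp N * N.+1)%N with (Nat.mul (Pp N) N.+1).
    rewrite mult_INR ln_mult //.
    * apply: lt_0_INR; apply/ltP; exact: Pp_pos.
    * apply: lt_0_INR; lia.
  + have Hp : prime N.+1 = false.
      by apply/negbTE/negP => /prime_bridge.
    rewrite Hp muln1; lra.
Qed.

Lemma INR_expn a k : INR (a ^ k)%N = INR a ^ k.
Proof.
elim: k => [|k IH]; first by rewrite expn0.
rewrite expnS; change (a * a ^ k)%N with (Nat.mul a (a ^ k)%N).
rewrite mult_INR IH /=; reflexivity.
Qed.

Lemma theta_le N : sum_f_R0 lp N.+1 <= INR N * ln 4.
Proof.
rewrite theta_eq.
have H := Pp_le N.
have H' : INR (Pp N.+1) <= INR (4 ^ N)%N by apply: le_INR; apply/leP.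
rewrite -ln_pow; last lra.
apply: ln_le.
- apply: lt_0_INR; apply/ltP; exact: Pp_pos.
- move: H'; rewrite INR_expn; have -> : INR 4 = 4 by simpl; lra.
  by [].
Qed.

Lemma exp_step x y r r' : y = 2 * x -> 0 <= r -> r <= exp x -> r' <= r * r -> r' <= exp y.
Proof.
intros -> Hr H1 H2.
replace (2 * x) with (x + x) by ring. rewrite exp_plus.
assert (r * r <= exp x * exp x) by (apply Rmult_le_compat; lra).
lra.
Qed.

Lemma e_ge : 27/10 <= exp 1.
Proof.
assert (h0 : 1 + 1/128 <= exp (1/128)) by apply exp_ineq1_le.
assert (h1 : 1015686/1000000 <= exp (1/64)) by (apply (exp_step (1/128) _ (1 + 1/128)); lra).
assert (h2 : 1031618/1000000 <= exp (1/32)) by (apply (exp_step (1/64) _ (1015686/1000000)); lra).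
assert (h3 : 1064235/1000000 <= exp (1/16)) by (apply (exp_step (1/32) _ (1031618/1000000)); lra).
assert (h4 : 1132596/1000000 <= exp (1/8)) by (apply (exp_step (1/16) _ (1064235/1000000)); lra).
assert (h5 : 1282773/1000000 <= exp (1/4)) by (apply (exp_step (1/8) _ (1132596/1000000)); lra).
assert (h6 : 1645506/1000000 <= exp (1/2)) by (apply (exp_step (1/4) _ (1282773/1000000)); lra).
assert (h7 : 2707689/1000000 <= exp 1) by (apply (exp_step (1/2) _ (1645506/1000000)); lra).
lra.
Qed.

Lemma ln2_le : ln 2 <= 7/10.
Proof.
assert (h0 : 1 + 7/640 <= exp (7/640)) by apply exp_ineq1_le.
assert (h1 : 1021994/1000000 <= exp (7/320)) by (apply (exp_step (7/640) _ (1 + 7/640)); lra).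
assert (h2 : 1044471/1000000 <= exp (7/160)) by (apply (exp_step (7/320) _ (1021994/1000000)); lra).
assert (h3 : 1090919/1000000 <= exp (7/80)) by (apply (exp_step (7/160) _ (1044471/1000000)); lra).
assert (h4 : 1190104/1000000 <= exp (7/40)) by (apply (exp_step (7/80) _ (1090919/1000000)); lra).
assert (h5 : 1416347/1000000 <= exp (7/20)) by (apply (exp_step (7/40) _ (1190104/1000000)); lra).
assert (h6 : 2006038/1000000 <= exp (7/10)) by (apply (exp_step (7/20) _ (1416347/1000000)); lra).
rewrite -(ln_exp (7/10)).
apply Rlt_le, ln_increasing; lra.
Qed.

Definition U (sg : R) (n : nat) := exp (sg * ln (INR n)).
Definition phi (sg : R) (n : nat) := / (U sg n * U sg n).
Definition ee (sg : R) (n : nat) := / (U sg n * U sg n * (U sg n - 1)).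
Definition psi (a : R) (n : nat) := exp (- (2*a) * ln (INR n)).

Lemma ln_diff_ge x : 2 <= x -> / x <= ln x - ln (x - 1).
Proof.
move=> Hx.
have Hr : 0 < (x - 1) / x by apply: Rdiv_lt_0_compat; lra.
have H1 := exp_ineq1_le (ln ((x - 1) / x)).
rewrite exp_ln // in H1.
rewrite ln_div in H1; try lra.
have : (x - 1) / x = 1 - / x by field; lra.
move=> E; rewrite E in H1; lra.
Qed.

Lemma INR_pos2 n : (2 <= n)%N -> 2 <= INR n.
Proof. move=> H; have -> : 2 = INR 2 by simpl; lra. apply: le_INR; apply/leP; exact H. Qed.

Lemma tele sg n : 1/2 < sg -> (2 <= n)%N ->
  phi sg n <= (psi (sg - 1/2) n.-1 - psi (sg - 1/2) n) / (2 * (sg - 1/2)).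
Proof.
move=> Hs Hn.
set a := sg - 1/2.
have Ha : 0 < a by rewrite /a; lra.
have Hx := INR_pos2 n Hn.
set x := INR n in Hx.
have Ey : INR n.-1 = x - 1.
  rewrite /x; case: n Hn {x Hx} => [|n] Hn //; rewrite S_INR; simpl Nat.pred; lra.
set L := ln x.
set P := exp (- (2*a) * L).
have HP : 0 < P by apply: exp_pos.
have E1 : phi sg n = P / x.
  rewrite /phi /U -/x -/L -exp_plus.
  have -> : sg * L + sg * L = 2 * a * L + L by rewrite /a; field.
  rewrite exp_plus exp_ln; last lra.
  rewrite /P (_ : - (2 * a) * L = - (2 * a * L)); last ring.
  rewrite exp_Ropp; field; split; try lra; apply: Rgt_not_eq; apply: exp_pos.
have E2 : psi a n.-1 = P * exp (2 * a * (L - ln (x - 1))).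
  rewrite /psi Ey /P -exp_plus. congr exp; ring.
have E3 : psi a n = P by [].
have H4 := exp_ineq1_le (2 * a * (L - ln (x - 1))).
have H5 := ln_diff_ge _ Hx.
rewrite -/L in H5.
rewrite E1 E2 E3.
set q := L - ln (x - 1) in H4 H5 *.
set E := exp (2 * a * q) in H4 *.
have H8 : P / x <= P * q.
  rewrite /Rdiv; apply: Rmult_le_compat_l; lra.
have Eq : P * q = (P * (1 + 2*a*q) - P) / (2*a) by field; lra.
apply: Rle_trans H8 _; rewrite Eq /Rdiv.
apply: Rmult_le_compat_r; first by apply: Rlt_le; apply: Rinv_0_lt_compat; lra.
have : P * (1 + 2 * a * q) <= P * E by apply: Rmult_le_compat_l; lra.
lra.
Qed.


Lemma lp_small n : (n < 2)%N -> lp n = 0.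
Proof.
move=> Hn; rewrite /lp; case: (prime_dec (Z.of_nat n)) => [H|H] /=; last by [].
move/Znumtheory.prime_alt: H => [H0 _]; lia.
Qed.

Lemma lp_ge0 n : 0 <= lp n.
Proof.
rewrite /lp; case: (prime_dec (Z.of_nat n)) => [H|H] /=; last lra.
move/Znumtheory.prime_alt: H => [H0 _].
rewrite -ln_1; apply: ln_le; first lra.
have -> : 1 = INR 1 by [].
apply: le_INR; lia.
Qed.

Lemma U_pos sg n : 0 < U sg n.
Proof. exact: exp_pos. Qed.

Lemma phi_pos sg n : 0 < phi sg n.
Proof. rewrite /phi; apply: Rinv_0_lt_compat; have := U_pos sg n; nra. Qed.

Lemma U_incr sg n : 0 < sg -> (1 <= n)%N -> U sg n <= U sg n.+1.
Proof.
move=> Hs Hn; rewrite /U.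
have H1 : 0 < INR n by apply: lt_0_INR; lia.
have H2 : INR n <= INR n.+1 by rewrite S_INR; lra.
have := ln_le _ _ H1 H2 => H3.
case: (Rle_lt_or_eq_dec _ _ (Rmult_le_compat_l sg _ _ (Rlt_le _ _ Hs) H3)) => H4.
- by apply: Rlt_le; apply: exp_increasing.
- by rewrite H4; lra.
Qed.

Lemma phi_decr sg n : 0 < sg -> (1 <= n)%N -> phi sg n.+1 <= phi sg n.
Proof.
move=> Hs Hn; rewrite /phi.
have := U_incr sg n Hs Hn; have := U_pos sg n => H1 H2.
apply: Rinv_le_contravar; nra.
Qed.

Lemma psi1 a : psi a 1 = 1.
Proof. by rewrite /psi /= ln_1 Rmult_0_r exp_0. Qed.

Lemma psi_pos a n : 0 < psi a n.
Proof. exact: exp_pos. Qed.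

Lemma ln4_pos : 0 < ln 4.
Proof. rewrite -ln_1; apply: ln_increasing; lra. Qed.

Lemma partA_aux sg M : 1/2 < sg ->
  sum_f_R0 (fun n => lp n * phi sg n) M.+1
  + (INR M * ln 4 - sum_f_R0 lp M.+1) * phi sg M.+1
  <= ln 4 * (1 - psi (sg - 1/2) M.+1) / (2 * (sg - 1/2)).
Proof.
move=> Hs.
have Ha : 0 < 2 * (sg - 1/2) by lra.
elim: M => [|M IH].
- rewrite /= !lp_small // psi1 /=; lra.
- have Ht := tele sg M.+2 Hs isT.
  simpl Nat.pred in Ht.
  have Hd := phi_decr sg M.+1 ltac:(lra) isT.
  have Hc := theta_le M.
  have H4 := ln4_pos.
  set c := INR M * ln 4 - sum_f_R0 lp M.+1 in IH Hc.
  have Hc0 : 0 <= c by rewrite /c; lra.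
  have -> : sum_f_R0 (fun n => lp n * phi sg n) M.+2 =
     sum_f_R0 (fun n => lp n * phi sg n) M.+1 + lp M.+2 * phi sg M.+2 by [].
  have -> : sum_f_R0 lp M.+2 = sum_f_R0 lp M.+1 + lp M.+2 by [].
  rewrite S_INR.
  have E : (INR M + 1) * ln 4 - (sum_f_R0 lp M.+1 + lp M.+2) = c + ln 4 - lp M.+2
    by rewrite /c; ring.
  rewrite E.
  have H5 : c * phi sg M.+2 <= c * phi sg M.+1 by apply: Rmult_le_compat_l.
  have H6 : ln 4 * phi sg M.+2 <= ln 4 * ((psi (sg - 1 / 2) M.+1 - psi (sg - 1 / 2) M.+2) / (2 * (sg - 1 / 2))).
    by apply: Rmult_le_compat_l; lra.
  have E2 : ln 4 * (1 - psi (sg - 1 / 2) M.+2) / (2 * (sg - 1 / 2)) =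
    ln 4 * (1 - psi (sg - 1 / 2) M.+1) / (2 * (sg - 1 / 2)) +
    ln 4 * ((psi (sg - 1 / 2) M.+1 - psi (sg - 1 / 2) M.+2) / (2 * (sg - 1 / 2))).
    field; lra.
  rewrite E2; nra.
Qed.

Lemma partA sg N : 1/2 < sg ->
  sum_f_R0 (fun n => lp n * phi sg n) N <= ln 4 / (2 * (sg - 1/2)).
Proof.
move=> Hs.
have Ha : 0 < 2 * (sg - 1/2) by lra.
have H4 := ln4_pos.
case: N => [|M].
- rewrite /= lp_small //; have : 0 <= ln 4 / (2 * (sg - 1/2)).
    by apply: Rlt_le; apply: Rdiv_lt_0_compat.
  lra.
- have H := partA_aux sg M Hs.
  have Hc := theta_le M.
  have Hp := phi_pos sg M.+1.
  have Hq := psi_pos (sg - 1/2) M.+1.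
  have H1 : 0 <= (INR M * ln 4 - sum_f_R0 lp M.+1) * phi sg M.+1 by nra.
  have H2 : ln 4 * (1 - psi (sg - 1 / 2) M.+1) / (2 * (sg - 1 / 2)) <= ln 4 / (2 * (sg - 1/2)).
    rewrite /Rdiv; apply: Rmult_le_compat_r; first by apply: Rlt_le; apply: Rinv_0_lt_compat.
    nra.
  lra.
Qed.


Definition cp (n:nat) : R :=
  if prime_dec (Z.of_nat n) then / (INR n * (sqrt (INR n) - 1)) else 0.

Lemma exp_ge_ey y : exp 1 * y <= exp y.
Proof.
have -> : exp y = exp 1 * exp (y - 1) by rewrite -exp_plus; congr exp; ring.
have := exp_ineq1_le (y - 1); have := exp_pos 1; nra.
Qed.

Lemma partB_pt sg n : 1/2 < sg ->
  (sg - 1/2) * (lp n * ee sg n) <= cp n / (81/10).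
Proof.
move=> Hs.
rewrite /lp /cp; case: (prime_dec (Z.of_nat n)) => [H|H] /=; last lra.
move/Znumtheory.prime_alt: H => [H0 _].
have Hx : 2 <= INR n by apply: INR_pos2; lia.
set x := INR n in Hx *.
set a := sg - 1/2.
have Ha : 0 < a by rewrite /a; lra.
set L := ln x.
have HL : 0 < L by rewrite /L -ln_1; apply: ln_increasing; lra.
set w := exp (a * L).
have Hw : 1 <= w by have := exp_ineq1_le (a * L); rewrite -/w; nra.
set s := sqrt x.
have Hs1 : 1 < s.
  rewrite /s -sqrt_1; apply: sqrt_lt_1_alt; lra.
have Hss : s * s = x by rewrite /s; apply: sqrt_sqrt; lra.
have HU : U sg n = s * w.
  rewrite /U -/x -/L /w /s -Rpower_sqrt; last lra.
  rewrite /Rpower -exp_plus; congr exp; rewrite /a -/L; field.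
have Hw3 : w * w * w = exp (3 * a * L).
  rewrite /w -!exp_plus; congr exp; ring.
have He := e_ge.
have Hw3' : 81/10 * (a * L) <= w * w * w.
  rewrite Hw3; have := exp_ge_ey (3 * a * L).
  have : 0 < a * L by nra.
  nra.
rewrite /ee HU.
set D' := x * (w * w * w) * (s - 1).
have HD' : 0 < D'.
  rewrite /D'; apply: Rmult_lt_0_compat; [apply: Rmult_lt_0_compat; [lra|]|lra]; nra.
have HD : D' <= s * w * (s * w) * (s * w - 1).
  rewrite /D' -Hss; nra.
have Hinv : / (s * w * (s * w) * (s * w - 1)) <= / D'.
  by apply: Rinv_le_contravar.
have Ec : / (x * (s - 1)) = (w * w * w) / D'.
  rewrite /D'; field; repeat split; try lra; nra.
rewrite Ec.
have H1 : a * (L * / (s * w * (s * w) * (s * w - 1))) <= a * L * / D'.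
  rewrite -Rmult_assoc; apply: Rmult_le_compat_l; nra.
apply: Rle_trans H1 _.
rewrite /Rdiv.
have Hi : 0 < / D' by apply: Rinv_0_lt_compat.
nra.
Qed.


Lemma cp_mc n : cp n = if prime n then / (INR n * (sqrt (INR n) - 1)) else 0.
Proof.
rewrite /cp; case: (prime_dec (Z.of_nat n)) => [H|H] /=.
- by have -> : prime n by apply/prime_bridge.
- have -> : prime n = false by apply/negbTE/negP => /prime_bridge.
  by [].
Qed.

Lemma cp_ge0 n : 0 <= cp n.
Proof.
rewrite /cp; case: (prime_dec (Z.of_nat n)) => [H|H] /=; last lra.
move/Znumtheory.prime_alt: H => [H0 _].
have Hx : 2 <= INR n by apply: INR_pos2; lia.
have Hs : 1 < sqrt (INR n).
  rewrite -sqrt_1; apply: sqrt_lt_1_alt; lra.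
apply: Rlt_le; apply: Rinv_0_lt_compat; nra.
Qed.

Lemma sqrt_ge q x : 0 <= q -> q * q <= x -> q <= sqrt x.
Proof.
move=> Hq Hx.
rewrite -(sqrt_square q) //; apply: sqrt_le_1_alt; lra.
Qed.

Lemma cp_bound (k : nat) (q c : R) : 1 < q -> q * q <= INR k -> 1 <= c * (INR k * (q - 1)) ->
  / (INR k * (sqrt (INR k) - 1)) <= c.
Proof.
move=> Hq Hk Hc.
have Hs := sqrt_ge q (INR k) ltac:(lra) Hk.
have Hk0 : 0 < INR k by nra.
have Hpos : 0 < INR k * (q - 1) by apply: Rmult_lt_0_compat; lra.
apply: Rle_trans (Rinv_le_contravar _ _ Hpos _) _; first nra.
have Hi : 0 < / (INR k * (q - 1)) by apply: Rinv_0_lt_compat.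
have E : / (INR k * (q - 1)) * (INR k * (q - 1)) = 1 by field; nra.
nra.
Qed.
Definition qt (n : nat) : R :=
  match n with
  | 2%nat => 141/100
  | 3%nat => 173/100
  | 4%nat => 200/100
  | 5%nat => 223/100
  | 6%nat => 244/100
  | 7%nat => 264/100
  | 8%nat => 282/100
  | 9%nat => 300/100
  | 10%nat => 316/100
  | 11%nat => 331/100
  | 12%nat => 346/100
  | 13%nat => 360/100
  | 14%nat => 374/100
  | 15%nat => 387/100
  | 16%nat => 400/100
  | 17%nat => 412/100
  | 18%nat => 424/100
  | 19%nat => 435/100
  | 20%nat => 447/100
  | 21%nat => 458/100
  | 22%nat => 469/100
  | 23%nat => 479/100
  | 24%nat => 489/100
  | 25%nat => 500/100
  | 26%nat => 509/100
  | 27%nat => 519/100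
  | 28%nat => 529/100
  | 29%nat => 538/100
  | 30%nat => 547/100
  | 31%nat => 556/100
  | 32%nat => 565/100
  | 33%nat => 574/100
  | 34%nat => 583/100
  | 35%nat => 591/100
  | 36%nat => 600/100
  | 37%nat => 608/100
  | 38%nat => 616/100
  | 39%nat => 624/100
  | 40%nat => 632/100
  | 41%nat => 640/100
  | 42%nat => 648/100
  | 43%nat => 655/100
  | 44%nat => 663/100
  | 45%nat => 670/100
  | 46%nat => 678/100
  | 47%nat => 685/100
  | 48%nat => 692/100
  | 49%nat => 700/100
  | 50%nat => 707/100
  | 51%nat => 714/100
  | 52%nat => 721/100
  | 53%nat => 728/100
  | 54%nat => 734/100
  | 55%nat => 741/100
  | 56%nat => 748/100
  | 57%nat => 754/100
  | 58%nat => 761/100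
  | 59%nat => 768/100
  | 60%nat => 774/100
  | 61%nat => 781/100
  | 62%nat => 787/100
  | 63%nat => 793/100
  | 64%nat => 800/100
  | 65%nat => 806/100
  | 66%nat => 812/100
  | 67%nat => 818/100
  | 68%nat => 824/100
  | 69%nat => 830/100
  | 70%nat => 836/100
  | 71%nat => 842/100
  | 72%nat => 848/100
  | 73%nat => 854/100
  | 74%nat => 860/100
  | 75%nat => 866/100
  | 76%nat => 871/100
  | 77%nat => 877/100
  | 78%nat => 883/100
  | 79%nat => 888/100
  | 80%nat => 894/100
  | 81%nat => 900/100
  | _ => 2
  end.

Definition bnd (n : nat) : R :=
  match n with
  | 2%nat => 50/41
  | 3%nat => 100/219
  | 5%nat => 20/123
  | 7%nat => 25/287
  | 11%nat => 100/2541
  | 13%nat => 5/169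
  | 17%nat => 25/1326
  | 19%nat => 20/1273
  | 23%nat => 100/8717
  | 29%nat => 50/6351
  | 31%nat => 25/3534
  | 37%nat => 25/4699
  | 41%nat => 5/1107
  | 43%nat => 20/4773
  | 47%nat => 20/5499
  | 53%nat => 25/8321
  | 59%nat => 25/9853
  | 61%nat => 100/41541
  | 67%nat => 50/24053
  | 71%nat => 50/26341
  | 73%nat => 50/27521
  | 79%nat => 25/15563
  | _ => 0
  end.

Ltac solve_pt :=
  rewrite cp_mc;
  match goal with |- context [prime ?k] =>
    let b := eval vm_compute in (prime k) in change (prime k) with b end;
  cbv beta iota delta [bnd];
  first [ lra
        | match goal with |- context [INR ?k] =>
            apply: (cp_bound k (qt k)); cbv beta iota delta [qt];
            try rewrite INR_IZR_INZ; simpl Z.of_nat; lra end ].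

Lemma cp_le_bnd n : (n <= 81)%N -> cp n <= bnd n.
Proof.
move=> Hn.
case: n Hn => [|n] Hn.
  rewrite /cp; case: (prime_dec (Z.of_nat 0)) => [H|H] /=; last (simpl; lra).
  move/Znumtheory.prime_alt: H => [H0 _]; lia.
case: n Hn => [|n] Hn.
  rewrite /cp; case: (prime_dec (Z.of_nat 1)) => [H|H] /=; last (simpl; lra).
  move/Znumtheory.prime_alt: H => [H0 _]; lia.
do 80 (case: n Hn => [|n] Hn; [solve_pt|]).
lia.
Qed.

Lemma sum_bnd : sum_f_R0 bnd 81 <= 209/100.
Proof. cbv beta iota delta [sum_f_R0 bnd]. lra. Qed.

Lemma sum_mono f N k : (forall n, 0 <= f n) -> sum_f_R0 f N <= sum_f_R0 f (N + k).
Proof.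
move=> Hf; elim: k => [|k IH]; first by rewrite addn0; lra.
rewrite addnS (_ : sum_f_R0 f (N + k).+1 = sum_f_R0 f (N + k) + f (N + k).+1) //.
have := Hf (N + k).+1; lra.
Qed.

Lemma div_le A B C : 0 < A -> 0 < B -> B <= C * A -> / A <= C / B.
Proof.
move=> HA HB H.
have H1 : 0 <= (C * A - B) / (A * B).
  apply: Rmult_le_pos; first lra.
  apply: Rlt_le; apply: Rinv_0_lt_compat; nra.
have E : (C * A - B) / (A * B) = C / B - / A by field; lra.
lra.
Qed.

Definition ttl (m : nat) : R := 2 / (sqrt (INR m) - 1).

Lemma cp_tele m : (2 <= m)%N -> cp m.+1 <= ttl m - ttl m.+1.
Proof.
move=> Hm.
have Hx : 2 <= INR m by apply: INR_pos2.
set v := sqrt (INR m).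
set u := sqrt (INR m.+1).
have Hv1 : 1 < v by rewrite /v -sqrt_1; apply: sqrt_lt_1_alt; lra.
have HSm : INR m.+1 = INR m + 1 by rewrite S_INR.
have Huv : v < u by rewrite /u /v; apply: sqrt_lt_1_alt; lra.
have Hvv : v * v = INR m by rewrite /v; apply: sqrt_sqrt; lra.
have Huu : u * u = INR m.+1 by rewrite /u; apply: sqrt_sqrt; lra.
have Ett : ttl m - ttl m.+1 = 2 * (u - v) / ((v - 1) * (u - 1)).
  rewrite /ttl -/u -/v; field; lra.
rewrite Ett.
have Hpos : 0 < 2 * (u - v) / ((v - 1) * (u - 1)).
  apply: Rdiv_lt_0_compat; nra.
rewrite cp_mc; case: (prime m.+1); last lra.
rewrite -/u -Huu.
apply: div_le; try nra.
have h1 : (u - v) * (u + v) = 1 by nra.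
have h2 : v - 1 <= 2 * (u - v) * (u * u) by nra.
nra.
Qed.

Lemma sqrt81 : sqrt (INR 81) = 9.
Proof.
rewrite INR_IZR_INZ; simpl Z.of_nat.
rewrite (_ : IZR 81 = 9 * 9); last lra.
by apply: sqrt_square; lra.
Qed.

Lemma tt_ge0 m : (2 <= m)%N -> 0 <= ttl m.
Proof.
move=> Hm; have Hx : 2 <= INR m by apply: INR_pos2.
have : 1 < sqrt (INR m) by rewrite -sqrt_1; apply: sqrt_lt_1_alt; lra.
move=> H; rewrite /ttl; apply: Rlt_le; apply: Rdiv_lt_0_compat; lra.
Qed.

Lemma tail_sum k : sum_f_R0 cp (81 + k) + ttl (81 + k) <= sum_f_R0 cp 81 + 1/4.
Proof.
elim: k => [|k IH].
- rewrite addn0 /ttl sqrt81; lra.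
- rewrite addnS (_ : sum_f_R0 cp (81 + k).+1 = sum_f_R0 cp (81 + k) + cp (81 + k).+1) //.
  have := cp_tele (81 + k) ltac:(lia).
  lra.
Qed.

Lemma partC N : sum_f_R0 cp N <= 234/100.
Proof.
have Hb : sum_f_R0 cp 81 <= 209/100.
  apply: Rle_trans (sum_bnd).
  apply: sum_Rle => n Hn; apply: cp_le_bnd; apply/leP; exact Hn.
case: (leqP N 81) => HN.
- have := sum_mono cp N (81 - N) cp_ge0.
  rewrite subnKC //; lra.
- have -> : N = (81 + (N - 81))%N by lia.
  have := tail_sum (N - 81).
  have := tt_ge0 (81 + (N - 81)) ltac:(lia).
  lra.
Qed.


Definition bb (sg : R) (n : nat) := lp n * (phi sg n + ee sg n).

Lemma U_gt1 sg n : 0 < sg -> (2 <= n)%N -> 1 < U sg n.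
Proof.
move=> Hs Hn; have Hx := INR_pos2 n Hn.
have HL : 0 < ln (INR n) by rewrite -ln_1; apply: ln_increasing; lra.
rewrite /U; have := exp_ineq1_le (sg * ln (INR n)); nra.
Qed.

Lemma bb_ge0 sg n : 0 < sg -> 0 <= bb sg n.
Proof.
move=> Hs; rewrite /bb /lp; case: (prime_dec (Z.of_nat n)) => [H|H] /=; last lra.
move/Znumtheory.prime_alt: H => [H0 _].
have Hx : 2 <= INR n by apply: INR_pos2; lia.
have HL : 0 < ln (INR n) by rewrite -ln_1; apply: ln_increasing; lra.
have HU := U_gt1 sg n Hs ltac:(lia).
have H1 : 0 < phi sg n := phi_pos sg n.
have H2 : 0 < ee sg n.
  rewrite /ee; apply: Rinv_0_lt_compat; apply: Rmult_lt_0_compat; [apply: Rmult_lt_0_compat|]; lra.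
nra.
Qed.

Lemma Cmod_cpow x s : 0 < x -> Cmod (cpow x s) = exp (fst s * ln x).
Proof.
move=> Hx; rewrite /Cmod /cpow /=.
set r := exp (fst s * ln x).
have Hr : 0 < r by apply: exp_pos.
have -> : (r * cos (snd s * ln x)) ^ 2 + (r * sin (snd s * ln x)) ^ 2 = r ^ 2.
  have := sin2_cos2 (snd s * ln x); rewrite /Rsqr => H; nra.
by apply: sqrt_pow2; lra.
Qed.

Lemma Cmod_g_le s n : 1/2 < fst s -> Cmod (g_term s n) <= bb (fst s) n.
Proof.
move=> Hs; rewrite /g_term /bb /lp.
case: (prime_dec (Z.of_nat n)) => [H|H] /=; last by rewrite Cmod_0; lra.
move/Znumtheory.prime_alt: H => [H0 _].
have Hx : 2 <= INR n by apply: INR_pos2; lia.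
have HL : 0 < ln (INR n) by rewrite -ln_1; apply: ln_increasing; lra.
set z := cpow (INR n) s.
have Hz : Cmod z = U (fst s) n by rewrite /z Cmod_cpow; [by [] | lra].
have HU := U_gt1 (fst s) n ltac:(lra) ltac:(lia).
have Hz1 : U (fst s) n - 1 <= Cmod (Cminus z 1).
  have := Cmod_triangle (Cminus z 1) 1.
  rewrite Cmod_1 (_ : Cplus (Cminus z 1) 1 = z); first lra.
  rewrite /Cminus -Cplus_assoc (_ : Cplus (Copp 1) 1 = 0); first by rewrite Cplus_0_r.
  by rewrite Cplus_comm Cplus_opp_r.
have Hnz : Cmult z (Cminus z 1) <> 0.
  move=> E; have := f_equal Cmod E; rewrite Cmod_mult Cmod_0 Hz => E'.
  have : 0 < U (fst s) n * Cmod (Cminus z 1) by apply: Rmult_lt_0_compat; lra.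
  lra.
rewrite Cmod_div // Cmod_mult Cmod_R Rabs_pos_eq; last lra.
rewrite Hz.
have E : phi (fst s) n + ee (fst s) n = / (U (fst s) n * (U (fst s) n - 1)).
  rewrite /phi /ee; field; lra.
rewrite E /Rdiv; apply: Rmult_le_compat_l; first lra.
apply: Rinv_le_contravar; first nra.
apply: Rmult_le_compat_l; lra.
Qed.

Lemma sum_bb sg N : 1/2 < sg <= 3/4 ->
  sum_f_R0 (bb sg) N <= (7/10 + (234/100) / (81/10)) / (sg - 1/2).
Proof.
move=> [Hs1 Hs2].
set a := sg - 1/2.
have Ha : 0 < a by rewrite /a; lra.
have E : sum_f_R0 (bb sg) N =
  sum_f_R0 (fun n => lp n * phi sg n) N + sum_f_R0 (fun n => lp n * ee sg n) N.
  rewrite -sum_plus; apply: PartSum.sum_eq => i _; rewrite /bb; ring.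
rewrite E.
have HA := partA sg N Hs1.
have Hl4 : ln 4 = 2 * ln 2.
  rewrite (_ : 4 = 2 * 2); last lra.
  rewrite ln_mult; lra.
have Hl2 := ln2_le.
have HA' : sum_f_R0 (fun n => lp n * phi sg n) N <= (7/10) / a.
  apply: Rle_trans HA _; rewrite Hl4 -/a.
  have -> : 2 * ln 2 / (2 * a) = ln 2 / a by field; lra.
  rewrite /Rdiv; apply: Rmult_le_compat_r; last lra.
  by apply: Rlt_le; apply: Rinv_0_lt_compat.
have HB : a * sum_f_R0 (fun n => lp n * ee sg n) N <= sum_f_R0 cp N / (81/10).
  rewrite scal_sum /Rdiv (Rmult_comm (sum_f_R0 cp N)) scal_sum.
  apply: sum_Rle => n _.
  have := partB_pt sg n Hs1; rewrite -/a /Rdiv; lra.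
have HC := partC N.
have HB' : sum_f_R0 (fun n => lp n * ee sg n) N <= ((234/100) / (81/10)) / a.
  have H1 : a * sum_f_R0 (fun n => lp n * ee sg n) N <= (234/100) / (81/10) by lra.
  apply: (Rmult_le_reg_l a); first lra.
  have -> : a * (234 / 100 / (81 / 10) / a) = 234 / 100 / (81 / 10) by field; lra.
  exact H1.
have -> : (7 / 10 + 234 / 100 / (81 / 10)) / a = 7/10/a + 234 / 100 / (81 / 10) / a
  by field; lra.
lra.
Qed.

Lemma norm_sum_le (g : nat -> C) (b : nat -> R) :
  (forall n, Cmod (g n) <= b n) -> forall N, norm (sum_n g N) <= sum_n b N.
Proof.
move=> H; elim => [|N IH].
- rewrite !sum_O; exact: H.
- rewrite !sum_Sn.
  apply: Rle_trans (norm_triangle _ _) _.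
  have := H N.+1; change (Cmod (g N.+1)) with (norm (g N.+1)); change (plus (sum_n b N) (b N.+1)) with (sum_n b N + b N.+1).
  lra.
Qed.

Theorem mainTheorem7 :
  forall s : C, 1/2 < fst s <= 3/4 ->
    exists l : C, is_series (g_term s) l /\
      Cmod l < (10053 / 10000) / (fst s - 1/2).
Proof.
move=> s Hs.
set sg := fst s in Hs *.
set K := (7/10 + (234/100) / (81/10)) / (sg - 1/2).
have Hbnd : forall N, sum_n (bb sg) N <= K.
  move=> N; rewrite sum_n_Reals; exact: sum_bb.
have Hb0 : forall n, 0 <= bb sg n by move=> n; apply: bb_ge0; lra.
have Hexb : ex_series (bb sg).
  have [l Hl] : ex_finite_lim_seq (sum_n (bb sg)).
    apply: (ex_finite_lim_seq_incr _ K) => // n.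
    rewrite sum_Sn; change (plus (sum_n (bb sg) n) (bb sg n.+1)) with (sum_n (bb sg) n + bb sg n.+1).
    have := Hb0 n.+1; lra.
  by exists l.
have Hle : forall n, norm (g_term s n) <= bb sg n.
  by move=> n; change (norm (g_term s n)) with (Cmod (g_term s n)); apply: Cmod_g_le; case: Hs.
have [l Hl] := ex_series_le (g_term s) (bb sg) Hle Hexb.
exists l; split; first exact Hl.
have Hlim : is_lim_seq (fun N => norm (sum_n (g_term s) N)) (norm l).
  exact: (filterlim_comp _ _ _ _ _ _ _ _ Hl (filterlim_norm l)).
have Hps : forall N, norm (sum_n (g_term s) N) <= K.
  move=> N; apply: Rle_trans (Hbnd N).
  apply: norm_sum_le => n; exact: Hle.
have := is_lim_seq_le _ _ _ _ Hps Hlim (is_lim_seq_const K).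
move=> /= HK; change (Cmod l) with (norm l).
apply: Rle_lt_trans HK _.
rewrite /K /Rdiv; apply: Rmult_lt_compat_r; last lra.
apply: Rinv_0_lt_compat; case: Hs => Hs1 _; lra.
Qed.
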